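(* Let $(X,\mathcal{O}(X))$ be a measurable space, $\mathcal{A}$ a unital $C^*$-algebra and $\mathcal{H}$ a Hilbert space. Let $\mathcal{I}:\mathcal{O}(X)\to CP(\mathcal{A},\mathcal{B}(\mathcal{H}))$ be a CP instrument with minimal bi-dilation $(\mathcal{K},\pi,E,V)$. Then for any $A\in\mathcal{O}(X)$, $\mathcal{I}(A)=0$ if and only if $(\pi E)(A)=0$. In particular, for $S\in\mathcal{O}(X)$, $\mathcal{I}$ is concentrated on $S$ if and only if $\pi E$ is concentrated on $S$.
   Context: A CP instrument is a map $\mathcal{I}$ from $\mathcal{O}(X)$ to the completely positive maps $\mathcal{A}\to\mathcal{B}(\mathcal{H})$ such that for all $a\in\mathcal{A}$, $h,k\in\mathcal{H}$, $A\mapsto\langle h,\mathcal{I}(A)(a)k\rangle$ is a countably additive complex measure; write $\mathcal{I}(A,a)=\mathcal{I}(A)(a)$. A minimal bi-dilation is a quadruple $(\mathcal{K},\pi,E,V)$ with $\pi:\mathcal{A}\to\mathcal{B}(\mathcal{K})$ a unital $*$-homomorphism, $E:\mathcal{O}(X)\to\mathcal{B}(\mathcal{K})$ a spectral measure commuting with $\pi$, $V\in\mathcal{B}(\mathcal{H},\mathcal{K})$, with $\mathcal{I}(A,a)=V^*\pi(a)E(A)V$ and $\overline{\mathrm{span}}\{\pi(a)E(A)Vh\}=\mathcal{K}$. $\pi E$ is the instrument $(\pi E)(A)(a)=\pi(a)E(A)$. An instrument $\mathcal{J}$ is concentrated on $S$ if $\mathcal{J}(A)=\mathcal{J}(A\cap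 S)$ for all $A\in\mathcal{O}(X)$. *)

(* Defs.v *)
From HB Require Import structures.
From mathcomp Require Import all_boot all_order all_algebra.
From mathcomp Require Import all_classical all_reals.
From mathcomp Require Import topology normedtype sequences measure.
From mathcomp Require Import complex.

Set Implicit Arguments.
Unset Strict Implicit.
Unset Printing Implicit Defensive.
Import Order.TTheory GRing.Theory Num.Theory.
Import numFieldNormedType.Exports.
Local Open Scope ring_scope.
Local Open Scope classical_set_scope.

Section OperatorDefs.
Variable R : realType.
Local Notation C := R[i].
Local Notation conj := (@conjc R).

(* An inner product, linear in the SECOND argument, conjugate-linear in the
   first (physics convention, matching <h, T k>). *)
Definition is_inner_product (V : lmodType C) (ip : V -> V -> C) : Prop :=
  [/\ (forall x y z : V, ip x (y + z) = ip x y + ip x z),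
      (forall (x y : V) (c : C), ip x (c *: y) = c * ip x y),
      (forall x y : V, ip y x = conj (ip x y)),
      (forall x : V, complex.Im (ip x x) = 0 /\ 0 <= complex.Re (ip x x)) &
      (forall x : V, ip x x = 0 -> x = 0)].

Definition ipnorm (V : lmodType C) (ip : V -> V -> C) (x : V) : R :=
  Num.sqrt (complex.Re (ip x x)).

Definition ip_complete (V : lmodType C) (ip : V -> V -> C) : Prop :=
  forall u : nat -> V,
    (forall e : R, 0 < e -> exists N : nat, forall m n : nat,
        (N <= m)%N -> (N <= n)%N -> ipnorm ip (u m - u n) < e) ->
    exists x : V, (fun n => ipnorm ip (u n - x)) @ \oo --> (0 : R).

Definition is_hilbert (V : lmodType C) (ip : V -> V -> C) : Prop :=
  is_inner_product ip /\ ip_complete ip.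

Definition bounded_linear (V W : lmodType C) (ipV : V -> V -> C)
    (ipW : W -> W -> C) (T : V -> W) : Prop :=
  [/\ (forall x y : V, T (x + y) = T x + T y),
      (forall (c : C) (x : V), T (c *: x) = c *: T x) &
      exists M : R, forall x : V, ipnorm ipW (T x) <= M * ipnorm ipV x].

Definition is_adjoint (V W : lmodType C) (ipV : V -> V -> C)
    (ipW : W -> W -> C) (T : V -> W) (Ts : W -> V) : Prop :=
  bounded_linear ipW ipV Ts /\ forall (x : V) (y : W), ipW (T x) y = ipV x (Ts y).

Definition is_unital_cstar (A : algType C) (star : A -> A) (nA : A -> R) : Prop :=
  (forall a b : A, star (a + b) = star a + star b) /\
  (forall (c : C) (a : A), star (c *: a) = conj c *: star a) /\
  (forall a b : A, star (a * b) = star b * star a) /\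
  (forall a : A, star (star a) = a) /\
  (forall a : A, 0 <= nA a) /\
  (forall a : A, nA a = 0 -> a = 0) /\
  (forall a b : A, nA (a + b) <= nA a + nA b) /\
  (forall (c : C) (a : A), nA (c *: a) = complex.ComplexField.Normc.normc c * nA a) /\
  (forall a b : A, nA (a * b) <= nA a * nA b) /\
  (forall u : nat -> A,
    (forall e : R, 0 < e -> exists N : nat, forall m n : nat,
       (N <= m)%N -> (N <= n)%N -> nA (u m - u n) < e) ->
    exists x : A, (fun n => nA (u n - x)) @ \oo --> (0 : R)) /\
  (forall a : A, nA (star a * a) = nA a ^+ 2).

(* phi is CP: phi is linear, each phi a is in B(H), and for every n and
   every B in M_n(A), the matrix [phi((B^* B)_{ij})] is a positive operator
   on H^n, i.e. sum_{i,j} <h_i, phi((B^*B)_{ij}) h_j> >= 0 for all h in H^n. *)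
Definition is_CP (A : algType C) (star : A -> A) (H : lmodType C)
    (ipH : H -> H -> C) (phi : A -> H -> H) : Prop :=
  [/\ (forall a b : A, phi (a + b) = (fun h => phi a h + phi b h)),
      (forall (c : C) (a : A), phi (c *: a) = (fun h => c *: phi a h)),
      (forall a : A, bounded_linear ipH ipH (phi a)) &
      (forall (n : nat) (B : 'I_n -> 'I_n -> A) (h : 'I_n -> H),
        let s := \sum_(i < n) \sum_(j < n)
                   ipH (h i) (phi (\sum_(k < n) star (B k i) * B k j) (h j)) in
        complex.Im s = 0 /\ 0 <= complex.Re s)].

Definition complex_meas_cadd (d : measure_display) (X : measurableType d)
    (mu : set X -> C) : Prop :=
  forall F : nat -> set X, (forall n, measurable (F n)) -> trivIset setT F ->
    (fun n => complex.Re (\sum_(i < n) mu (F i))) @ \oo --> complex.Re (mu (\bigcup_n F n)) /\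
    (fun n => complex.Im (\sum_(i < n) mu (F i))) @ \oo --> complex.Im (mu (\bigcup_n F n)).

Definition is_CP_instrument (d : measure_display) (X : measurableType d)
    (A : algType C) (star : A -> A) (H : lmodType C) (ipH : H -> H -> C)
    (I : set X -> A -> H -> H) : Prop :=
  (forall S, measurable S -> is_CP star ipH (I S)) /\
  (forall (a : A) (h k : H),
     complex_meas_cadd (fun S => ipH h (I S a k))).

Definition is_unital_star_hom (A : algType C) (star : A -> A) (K : lmodType C)
    (ipK : K -> K -> C) (pi : A -> K -> K) : Prop :=
  (forall a b : A, pi (a + b) = (fun x => pi a x + pi b x)) /\
  (forall (c : C) (a : A), pi (c *: a) = (fun x => c *: pi a x)) /\
  (forall a : A, bounded_linear ipK ipK (pi a)) /\
  (forall a b : A, pi (a * b) = (fun x => pi a (pi b x))) /\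
  pi 1 = id /\
  (forall (a : A) (x y : K), ipK x (pi (star a) y) = ipK (pi a x) y).

Definition is_spectral_measure (d : measure_display) (X : measurableType d)
    (K : lmodType C) (ipK : K -> K -> C) (E : set X -> K -> K) : Prop :=
  (forall S, measurable S -> bounded_linear ipK ipK (E S)) /\
  (forall S, measurable S -> forall x y : K, ipK x (E S y) = ipK (E S x) y) /\
  (forall S T, measurable S -> measurable T ->
     E (S `&` T) = (fun x => E S (E T x))) /\
  E set0 = (fun _ => 0) /\
  E setT = id /\
  (forall x y : K, complex_meas_cadd (fun S => ipK x (E S y))).

Definition is_minimal_bidilation (d : measure_display) (X : measurableType d)
    (A : algType C) (star : A -> A) (H : lmodType C) (ipH : H -> H -> C)
    (I : set X -> A -> H -> H)
    (K : lmodType C) (ipK : K -> K -> C) (pi : A -> K -> K)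
    (E : set X -> K -> K) (V : H -> K) (Vs : K -> H) : Prop :=
  is_unital_star_hom star ipK pi /\
  is_spectral_measure ipK E /\
  (forall S, measurable S -> forall a : A,
     (fun x => pi a (E S x)) = (fun x => E S (pi a x))) /\
  bounded_linear ipH ipK V /\
  is_adjoint ipH ipK V Vs /\
  (forall S, measurable S -> forall a : A,
     I S a = (fun h => Vs (pi a (E S (V h))))) /\
      (* closed linear span of {pi(a)E(S)Vh} is K *)
      (forall (x : K) (e : R), 0 < e ->
         exists (n : nat) (c : 'I_n -> C) (a : 'I_n -> A) (S : 'I_n -> set X)
                (h : 'I_n -> H),
           (forall i, measurable (S i)) /\
           ipnorm ipK (x - \sum_(i < n) c i *: pi (a i) (E (S i) (V (h i)))) < e).

End OperatorDefs.

(* Main.v *)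
Require Import Defs.
From HB Require Import structures.
From mathcomp Require Import all_boot all_order all_algebra.
From mathcomp Require Import all_classical all_reals.
From mathcomp Require Import topology normedtype sequences measure.
From mathcomp Require Import complex.
From mathcomp Require Import lra.
Import Order.TTheory GRing.Theory Num.Theory.
Import numFieldNormedType.Exports.
Local Open Scope ring_scope.
Local Open Scope classical_set_scope.
Set Implicit Arguments.

Section Gen.
Variable R : realType.
Variable K : lmodType R[i].
Variable ip : K -> K -> R[i].
Hypothesis Hip : is_inner_product ip.

Lemma ReB (a b : R[i]) : complex.Re (a - b) = complex.Re a - complex.Re b.
Proof. by case: a; case: b. Qed.
Lemma ReD (a b : R[i]) : complex.Re (a + b) = complex.Re a + complex.Re b.
Proof. by case: a; case: b. Qed.

Lemma ip_rD x y z : ip x (y + z) = ip x y + ip x z.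
Proof. by case: Hip. Qed.
Lemma ip_rZ x y c : ip x (c *: y) = c * ip x y.
Proof. by case: Hip. Qed.
Lemma ip_sym x y : ip y x = conjc (ip x y).
Proof. by case: Hip. Qed.

Lemma ip_r0 x : ip x 0 = 0.
Proof.
have := ip_rD x 0 0; rewrite addr0 => h.
by apply: (addrI (ip x 0)); rewrite addr0 -h.
Qed.
Lemma ip_rN x y : ip x (- y) = - ip x y.
Proof. by rewrite -scaleN1r ip_rZ mulN1r. Qed.
Lemma ip_rB x y z : ip x (y - z) = ip x y - ip x z.
Proof. by rewrite ip_rD ip_rN. Qed.
Lemma ip_lB x y z : ip (x - y) z = ip x z - ip y z.
Proof. by rewrite (ip_sym z x) (ip_sym z y) ip_sym ip_rB rmorphB. Qed.

Lemma ipnorm_ge0 x : 0 <= ipnorm ip x.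
Proof. exact: sqrtr_ge0. Qed.

Lemma ipnorm_le0 x : ipnorm ip x <= 0 -> x = 0.
Proof.
move=> h.
have e : ipnorm ip x = 0 by apply/eqP; rewrite eq_le h ipnorm_ge0.
move: e; rewrite /ipnorm => /eqP; rewrite sqrtr_eq0 => hle.
case: Hip => _ _ _ pos def; apply: def.
case: (pos x); move: hle; case: (ip x x) => a b /= h1 -> h2.
by have -> : a = 0 by apply/eqP; rewrite eq_le h1 h2.
Qed.

Lemma ip0_eq x : ip x x = 0 -> x = 0.
Proof. by case: Hip => _ _ _ _; apply. Qed.

Lemma proj_bound (P : K -> K) :
  (forall x y, P (x + y) = P x + P y) ->
  (forall x y, ip x (P y) = ip (P x) y) ->
  (forall x, P (P x) = P x) ->
  forall z, ipnorm ip (z - P z) <= ipnorm ip z.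
Proof.
move=> PD Psa PP z.
have [_ _ _ pos _] := Hip.
rewrite /ipnorm ler_sqrt; last by case: (pos z) => _.
have -> : ip (z - P z) (z - P z) = ip z z - ip (P z) (P z).
  have e1 : ip (P z) (P z) = ip z (P z) by rewrite -Psa PP.
  have e2 : ip (P z) z = ip z (P z) by rewrite Psa.
  by rewrite ip_lB !ip_rB e2 e1 subrr subr0.
rewrite ReB; case: (pos (P z)) => _ h; lra.
Qed.

Definition dens (G : K -> Prop) := forall (x : K) (e : R), 0 < e ->
  exists n (c : 'I_n -> R[i]) (g : 'I_n -> K),
    (forall i, G (g i)) /\ ipnorm ip (x - \sum_(i < n) c i *: g i) < e.

Lemma dense_zero (G : K -> Prop) (f : K -> K) (M : R) :
  (forall x y, f (x + y) = f x + f y) -> (forall c x, f (c *: x) = c *: f x) ->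
  (forall z, ipnorm ip (f z) <= M * ipnorm ip z) ->
  (forall y, G y -> f y = 0) -> dens G -> forall x, f x = 0.
Proof.
move=> fD fZ fB fG dG x.
have f0 : f 0 = 0.
  by have := fD 0 0; rewrite addr0 => h; apply: (addrI (f 0)); rewrite addr0 -h.
apply: ipnorm_le0; rewrite leNgt; apply/negP => hp.
set p := ipnorm ip (f x) in hp *.
pose N := `|M| + 1.
have hM := ler_norm M.
have hM0 := normr_ge0 M.
have N0 : 0 < N by rewrite /N; lra.
have [n [c [g [Gg hs]]]] := dG x (p / N) (divr_gt0 hp N0).
set s := \sum_(i < n) c i *: g i in hs.
have fs : f s = 0.
  rewrite /s; apply: (big_ind (fun v => f v = 0)) => //.
    by move=> u v hu hv; rewrite fD hu hv addr0.
  by move=> i _; rewrite fZ fG // scaler0.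
have fx : f x = f (x - s) by have := fD (x - s) s; rewrite subrK fs addr0.
have h0 : p <= M * ipnorm ip (x - s) by rewrite /p fx fB.
have q0 := ipnorm_ge0 (x - s).
have MN : M <= N by rewrite /N; lra.
have h1 : M * ipnorm ip (x - s) <= N * ipnorm ip (x - s) := ler_wpM2r q0 MN.
rewrite ltr_pdivlMr // mulrC in hs.
have : p < p by apply: (le_lt_trans h0); apply: (le_lt_trans h1).
by rewrite ltxx.
Qed.

End Gen.

Section BL.
Variable R : realType.
Variables V W : lmodType R[i].
Variable ipV : V -> V -> R[i].
Variable ipW : W -> W -> R[i].
Variable T : V -> W.
Hypothesis HT : bounded_linear ipV ipW T.

Lemma bl_D x y : T (x + y) = T x + T y. Proof. by case: HT. Qed.
Lemma bl_Z c x : T (c *: x) = c *: T x. Proof. by case: HT. Qed.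
Lemma bl_0 : T 0 = 0.
Proof. by have := bl_D 0 0; rewrite addr0 => h; apply: (addrI (T 0)); rewrite addr0 -h. Qed.
Lemma bl_B x y : T (x - y) = T x - T y.
Proof. by apply: (addIr (T y)); rewrite -bl_D !subrK. Qed.
Lemma bl_bound : exists M, 0 <= M /\ forall x, ipnorm ipW (T x) <= M * ipnorm ipV x.
Proof.
case: HT => _ _ [M HM]; exists `|M|; split => // x.
apply: le_trans (HM x) _; apply: ler_wpM2r; [exact: sqrtr_ge0 | exact: ler_norm].
Qed.
End BL.

Unset Implicit Arguments.

Theorem proposition2p16 (R : realType) (d : measure_display) (X : measurableType d)
    (A : algType R[i]) (star : A -> A) (nA : A -> R)
    (H : lmodType R[i]) (ipH : H -> H -> R[i])
    (I : set X -> A -> H -> H)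
    (K : lmodType R[i]) (ipK : K -> K -> R[i])
    (pi : A -> K -> K) (E : set X -> K -> K) (V : H -> K) (Vs : K -> H) :
  is_unital_cstar star nA ->
  is_hilbert ipH -> is_hilbert ipK ->
  is_CP_instrument star ipH I ->
  is_minimal_bidilation star ipH I ipK pi E V Vs ->
  (forall S : set X, measurable S ->
     ((forall (a : A) (h : H), I S a h = 0) <->
      (forall (a : A) (x : K), pi a (E S x) = 0))) /\
  (forall S : set X, measurable S ->
     ((forall B : set X, measurable B -> forall (a : A) (h : H),
          I B a h = I (B `&` S) a h) <->
      (forall B : set X, measurable B -> forall (a : A) (x : K),
          pi a (E B x) = pi a (E (B `&` S) x)))).
Proof.
move=> _ [HipH _] [HipK _] _ [Hpi [HE [Hcomm [HV [Hadj [HI Hdense]]]]]].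
case: Hpi => piD [piZ [piB [piM [pi1 piS]]]].
case: HE => EB [Esa [EI [E0 [ET _]]]].
case: Hadj => VsB Hadj.
have comm a U y : measurable U -> pi a (E U y) = E U (pi a y).
  by move=> mU; have := congr1 (fun g => g y) (Hcomm U mU a).
have piMx a b y : pi (a * b) y = pi a (pi b y) by rewrite piM.
have EIx U W y : measurable U -> measurable W -> E (U `&` W) y = E U (E W y).
  by move=> mU mW; rewrite EI.
have EUU U y : measurable U -> E U (E U y) = E U y.
  by move=> mU; rewrite -EIx // setIid.
have Ix U a h : measurable U -> I U a h = Vs (pi a (E U (V h))).
  by move=> mU; rewrite HI.
have gen a b U W v : measurable U -> measurable W ->
    pi a (E U (pi b (E W v))) = pi (a * b) (E (U `&` W) v).
  by move=> mU mW; rewrite -(comm b U) // -piMx -EIx.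
have KI c U y : measurable U ->
    ipK (pi c (E U y)) (pi c (E U y)) = ipK y (pi (star c * c) (E U y)).
  move=> mU; rewrite -piS -piMx (comm _ U) // Esa // EUU // -Esa // -comm //.
pose G y := exists b T h, measurable T /\ y = pi b (E T (V h)).
have dG : @dens _ _ ipK G.
  move=> z e e0; have [n [c [a' [T [h [mT hs]]]]]] := Hdense z e e0.
  exists n, c, (fun i => pi (a' i) (E (T i) (V (h i)))); split => // i.
  by exists (a' i), (T i), (h i).
split=> [S mS|S mS]; split.
- move=> HIS a x.
  have key c h : pi c (E S (V h)) = 0.
    apply: (ip0_eq HipK); rewrite KI // Hadj -Ix // HIS; exact: ip_r0.
  have [Mp [Mp0 HMp]] := bl_bound (piB a).
  have [Me [Me0 HMe]] := bl_bound (EB S mS).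
  apply: (@dense_zero _ _ _ HipK G (fun z => pi a (E S z)) (Mp * Me)) => //.
  + by move=> y z; rewrite (bl_D (EB S mS)) (bl_D (piB a)).
  + by move=> c y; rewrite (bl_Z (EB S mS)) (bl_Z (piB a)).
  + move=> z; apply: le_trans (HMp _) _; rewrite -mulrA; exact: ler_wpM2l.
  + move=> y [b [T [h [mT ->]]]].
    rewrite gen // setIC EIx // comm // key; exact: (bl_0 (EB T mT)).
- move=> H0 a h; rewrite Ix // H0; exact: (bl_0 VsB).
- move=> Hc B mB a x.
  have key2 c U h : measurable U -> pi c (E U (V h)) = pi c (E (U `&` S) (V h)).
    move=> mU; apply/eqP; rewrite -subr_eq0; apply/eqP.
    set w := V h - E S (V h).
    have -> : pi c (E U (V h)) - pi c (E (U `&` S) (V h)) = pi c (E U w).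
      by rewrite /w (bl_B (EB U mU)) (bl_B (piB c)) EIx.
    apply: (ip0_eq HipK); rewrite KI //.
    have J b U' : measurable U' -> ipK w (pi b (E U' (V h))) = 0.
      move=> mU'; rewrite /w (ip_lB HipK) -(Esa S mS) -(comm b S) // -EIx //.
      rewrite !Hadj -(Ix U') // -(Ix (S `&` U')); last exact: measurableI.
      rewrite (_ : I U' b h = I (S `&` U') b h) ?subrr //.
      rewrite (setIC S U'); exact: Hc.
    rewrite {2}/w (bl_B (EB U mU)) (bl_B (piB _)) (ip_rB HipK) -EIx //.
    by rewrite !J ?subr0 //; apply: measurableI.
  have [Mp [Mp0 HMp]] := bl_bound (piB a).
  have [Me [Me0 HMe]] := bl_bound (EB B mB).
  have fx0 : pi a (E B (x - E S x)) = 0.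
    apply: (@dense_zero _ _ _ HipK G (fun z => pi a (E B (z - E S z))) (Mp * Me)) => //.
  + by move=> y z; rewrite -(bl_D (piB a)) -(bl_D (EB B mB)) (bl_D (EB S mS)) opprD addrACA.
  + by move=> c y; rewrite -(bl_Z (piB a)) -(bl_Z (EB B mB)) (bl_Z (EB S mS)) scalerBr.
  + move=> z; apply: le_trans (HMp _) _; rewrite -mulrA; apply: ler_wpM2l => //.
    apply: le_trans (HMe _) _; apply: ler_wpM2l => //.
    exact: (proj_bound HipK (E S) (bl_D (EB S mS)) (Esa S mS) (fun y => EUU S y mS)).
  + move=> y [b [T [h [mT ->]]]].
    have mST : measurable (S `&` T) by exact: measurableI.
    have mBT : measurable (B `&` T) by exact: measurableI.
    rewrite (bl_B (EB B mB)) (bl_B (piB a)) gen // -(comm b S) // -EIx // gen //.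
    rewrite key2 //.
    have -> : B `&` (S `&` T) = B `&` T `&` S by rewrite -setIA (setIC S T).
    by rewrite subrr.
  move: fx0; rewrite (bl_B (EB B mB)) (bl_B (piB a)) -EIx // => /eqP.
  by rewrite subr_eq0 => /eqP.
- move=> H0 B mB a h; have mBS : measurable (B `&` S) by exact: measurableI.
  by rewrite !Ix // H0.
Qed.
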